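(* Let $c>0$, $n\ge 2$, and let $\mathbb{R}^n_c=\{\mathbf{v}\in\mathbb{R}^n:\|\mathbf{v}\|<c\}$ be equipped with Möbius addition $\oplus$, Möbius scalar multiplication $\otimes$ and Möbius coaddition $\boxplus$ (defined in the context). Let $A,B\in\mathbb{R}^n_c$ be distinct and, for $t\in\mathbb{R}$, define $$P_{AB}(t)=\tfrac12\otimes A\;\boxplus\;\Big\{\tfrac12\otimes A\oplus\Big[\big(\ominus\tfrac12\otimes A\oplus(B\ominus\tfrac12\otimes A)\big)\otimes t\Big]\Big\}.$$ Then $\{P_{AB}(t):t\in\mathbb{R}\}$ is the unique Euclidean straight line through $A$ and $B$ (intersected with the ball $\mathbb{R}^n_c$), i.e. it equals the set of points of $\mathbb{R}^n_c$ lying on the Euclidean line through $A$ and $B$.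
   Context: Möbius addition in the ball $\mathbb{R}^n_c$ is $$\mathbf{u}\oplus\mathbf{v}=\frac{\big(1+\frac{2}{c^2}\mathbf{u}\cdot\mathbf{v}+\frac{1}{c^2}\|\mathbf{v}\|^2\big)\mathbf{u}+\big(1-\frac{1}{c^2}\|\mathbf{u}\|^2\big)\mathbf{v}}{1+\frac{2}{c^2}\mathbf{u}\cdot\mathbf{v}+\frac{1}{c^4}\|\mathbf{u}\|^2\|\mathbf{v}\|^2},$$ with $\ominus\mathbf{v}=-\mathbf{v}$ and $\mathbf{u}\ominus\mathbf{v}=\mathbf{u}\oplus(-\mathbf{v})$. Scalar multiplication: for $r\in\mathbb{R}$ and $\mathbf{v}\neq\mathbf{0}$, $r\otimes\mathbf{v}=\mathbf{v}\otimes r=c\tanh\!\big(r\tanh^{-1}(\|\mathbf{v}\|/c)\big)\frac{\mathbf{v}}{\|\mathbf{v}\|}$, and $r\otimes\mathbf{0}=\mathbf{0}$; scalar multiplication binds more tightly than $\oplus,\ominus,\boxplus$. The gyration generated by $\mathbf{u},\mathbf{v}$ is $\mathrm{gyr}[\mathbf{u},\mathbf{v}]\mathbf{w}=\ominus(\mathbf{u}\oplus\mathbf{v})\oplus\big(\mathbf{u}\oplus(\mathbf{v}\oplus\mathbf{w})\big)$. Möbius coaddition is $\mathbf{a}\boxplus\mathbf{b}=\mathbf{a}\oplus\mathrm{gyr}[\mathbf{a},\ominus\mathbf{b}]\mathbf{b}$. *)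

(* Defs.v *)
From HB Require Import structures.
From mathcomp Require Import all_boot all_order all_algebra.
From mathcomp Require Import all_classical all_reals all_analysis.
Set Implicit Arguments. Unset Strict Implicit. Unset Printing Implicit Defensive.
Import Order.TTheory GRing.Theory Num.Theory.
Local Open Scope ring_scope.

Definition edot {R : realType} {n : nat} (u v : 'rV[R]_n) : R :=
  \sum_(i < n) u 0 i * v 0 i.
Definition enorm {R : realType} {n : nat} (v : 'rV[R]_n) : R :=
  Num.sqrt (edot v v).

Definition tanhR {R : realType} (x : R) : R :=
  (expR x - expR (- x)) / (expR x + expR (- x)).
Definition artanhR {R : realType} (x : R) : R := ln ((1 + x) / (1 - x)) / 2.

Definition madd {R : realType} {n : nat} (c : R) (u v : 'rV[R]_n) : 'rV[R]_n :=
  (1 + 2 / c ^+ 2 * edot u v + 1 / c ^+ 4 * enorm u ^+ 2 * enorm v ^+ 2)^-1 *: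
  ((1 + 2 / c ^+ 2 * edot u v + 1 / c ^+ 2 * enorm v ^+ 2) *: u
     + (1 - 1 / c ^+ 2 * enorm u ^+ 2) *: v).

(* Möbius subtraction u (-) v = u (+) (-v); (-) v = -v *)
Definition msub {R : realType} {n : nat} (c : R) (u v : 'rV[R]_n) : 'rV[R]_n :=
  madd c u (- v).

Definition mscale {R : realType} {n : nat} (c : R) (r : R) (v : 'rV[R]_n) : 'rV[R]_n :=
  if v == 0 then 0
  else (c * tanhR (r * artanhR (enorm v / c)) / enorm v) *: v.

Definition gyr {R : realType} {n : nat} (c : R) (u v w : 'rV[R]_n) : 'rV[R]_n :=
  madd c (- madd c u v) (madd c u (madd c v w)).

Definition mcoadd {R : realType} {n : nat} (c : R) (a b : 'rV[R]_n) : 'rV[R]_n :=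
  madd c a (gyr c a (- b) b).

Definition PAB {R : realType} {n : nat} (c : R) (A B : 'rV[R]_n) (t : R) : 'rV[R]_n :=
  let hA := mscale c (2^-1) A in
  mcoadd c hA (madd c hA (mscale c t (madd c (- hA) (msub c B hA)))).

(* Main.v *)
Require Import Defs.
From HB Require Import structures.
From mathcomp Require Import all_boot all_order all_algebra.
From mathcomp Require Import all_classical all_reals all_analysis.
From mathcomp Require Import ring lra.
Import Order.TTheory GRing.Theory Num.Theory.
Local Open Scope ring_scope.
Local Open Scope classical_set_scope.

Lemma edotC {R : realType} {n : nat} (u v : 'rV[R]_n) : edot u v = edot v u.
Proof. by rewrite /edot; apply: eq_bigr => i _; rewrite mulrC. Qed.

Lemma edotDl {R : realType} {n : nat} (u v w : 'rV[R]_n) :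
  edot (u + v) w = edot u w + edot v w.
Proof. by rewrite /edot -big_split; apply: eq_bigr => i _; rewrite !mxE mulrDl. Qed.

Lemma edotZl {R : realType} {n : nat} (a : R) (u v : 'rV[R]_n) :
  edot (a *: u) v = a * edot u v.
Proof. by rewrite /edot mulr_sumr; apply: eq_bigr => i _; rewrite !mxE mulrA. Qed.

Lemma edotDr {R : realType} {n : nat} (u v w : 'rV[R]_n) :
  edot w (u + v) = edot w u + edot w v.
Proof. by rewrite edotC edotDl !(edotC w). Qed.

Lemma edotZr {R : realType} {n : nat} (a : R) (u v : 'rV[R]_n) :
  edot v (a *: u) = a * edot v u.
Proof. by rewrite edotC edotZl edotC. Qed.

Lemma edot_ge0 {R : realType} {n : nat} (u : 'rV[R]_n) : 0 <= edot u u.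
Proof. by rewrite /edot; apply: sumr_ge0 => i _; rewrite -expr2 sqr_ge0. Qed.

Lemma enorm_sq {R : realType} {n : nat} (u : 'rV[R]_n) : enorm u ^+ 2 = edot u u.
Proof. by rewrite /enorm sqr_sqrtr // edot_ge0. Qed.

Definition cmb {R : realType} {n : nat} (x y : 'rV[R]_n) (a b : R) := a *: x + b *: y.

Definition cd {R : realType} (xx xy yy a1 b1 a2 b2 : R) :=
  a1*a2*xx + (a1*b2+b1*a2)*xy + b1*b2*yy.

Lemma edot_cmb {R : realType} {n : nat} (x y : 'rV[R]_n) a1 b1 a2 b2 :
  edot (cmb x y a1 b1) (cmb x y a2 b2) = cd (edot x x) (edot x y) (edot y y) a1 b1 a2 b2.
Proof.
rewrite /cmb /cd !edotDl !edotDr !edotZl !edotZr (edotC y x); ring.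
Qed.

Definition edk {R : realType} {n : nat} (c : R) (u v : 'rV[R]_n) := c^-2 * edot u v.

Lemma edk_cmb {R : realType} {n : nat} (c : R) (x y : 'rV[R]_n) a1 b1 a2 b2 :
  edk c (cmb x y a1 b1) (cmb x y a2 b2) = cd (edk c x x) (edk c x y) (edk c y y) a1 b1 a2 b2.
Proof. rewrite /edk edot_cmb /cd; ring. Qed.

Lemma edkC {R : realType} {n : nat} (c : R) (u v : 'rV[R]_n) : edk c u v = edk c v u.
Proof. by rewrite /edk edotC. Qed.

Lemma madd_e {R : realType} {n : nat} (c : R) (u v : 'rV[R]_n) :
  madd c u v = (1 + 2 * edk c u v + edk c u u * edk c v v)^-1 *:
   ((1 + 2 * edk c u v + edk c v v) *: u + (1 - edk c u u) *: v).
Proof.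
have e : (c^+4)^-1 = c^-2 ^+2 by rewrite exprVn -exprM.
rewrite /madd /edk !enorm_sq !mul1r e.
by congr (_^-1 *: (_ *: _ + _ *: _)); ring.
Qed.

Lemma cmb_aux {R : realType} {n : nat} (x y : 'rV[R]_n) (D P Q a1 b1 a2 b2 : R) :
  D^-1 *: (P *: cmb x y a1 b1 + Q *: cmb x y a2 b2) =
  cmb x y ((P*a1+Q*a2)/D) ((P*b1+Q*b2)/D).
Proof.
rewrite /cmb !scalerDr !scalerA addrACA -!scalerDl.
by rewrite -!mulrDr ![D^-1 * _]mulrC.
Qed.

Lemma madd_gen {R : realType} {n : nat} (c : R) (x y : 'rV[R]_n) a1 b1 a2 b2 E12 E11 E22 :
  edk c (cmb x y a1 b1) (cmb x y a2 b2) = E12 ->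
  edk c (cmb x y a1 b1) (cmb x y a1 b1) = E11 ->
  edk c (cmb x y a2 b2) (cmb x y a2 b2) = E22 ->
  madd c (cmb x y a1 b1) (cmb x y a2 b2) =
  cmb x y (((1 + 2*E12 + E22)*a1 + (1 - E11)*a2)/(1 + 2*E12 + E11*E22))
          (((1 + 2*E12 + E22)*b1 + (1 - E11)*b2)/(1 + 2*E12 + E11*E22)).
Proof. by move=> h1 h2 h3; rewrite madd_e h1 h2 h3 cmb_aux. Qed.

Lemma cmb_opp {R : realType} {n : nat} (x y : 'rV[R]_n) a b :
  - cmb x y a b = cmb x y (-a) (-b).
Proof. by rewrite /cmb opprD !scaleNr. Qed.

Lemma cmb10 {R : realType} {n : nat} (x y : 'rV[R]_n) : cmb x y 1 0 = x.
Proof. by rewrite /cmb scale1r scale0r addr0. Qed.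
Lemma cmb01 {R : realType} {n : nat} (x y : 'rV[R]_n) : cmb x y 0 1 = y.
Proof. by rewrite /cmb scale1r scale0r add0r. Qed.

Lemma quad_ge0 {R : realType} {n : nat} (u v : 'rV[R]_n) a b :
  0 <= a^+2 * edot u u + 2 * a * b * edot u v + b^+2 * edot v v.
Proof.
have := edot_ge0 (cmb u v a b); rewrite edot_cmb /cd.
suff -> : a * a * edot u u + (a * b + b * a) * edot u v + b * b * edot v v =
  a^+2 * edot u u + 2 * a * b * edot u v + b^+2 * edot v v by [].
ring.
Qed.

Lemma cs {R : realType} {n : nat} (u v : 'rV[R]_n) :
  edot u v ^+ 2 <= edot u u * edot v v.
Proof.
have h1 := quad_ge0 u v (edot v v) (- edot u v).
have h2 := quad_ge0 u v (edot u v) (- edot u u).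
have h3 := quad_ge0 u v 1 1.
have h4 := quad_ge0 u v 1 (-1).
have h5 := edot_ge0 u. have h6 := edot_ge0 v.
set a := edot u u in h1 h2 h3 h4 h5 h6 *.
set b := edot v v in h1 h2 h3 h4 h5 h6 *.
set p := edot u v in h1 h2 h3 h4 h5 h6 *.
have e1 : 0 <= b * (a * b - p^+2) by move: h1; congr (_ <= _); ring.
have e2 : 0 <= a * (a * b - p^+2) by move: h2; congr (_ <= _); ring.
rewrite leNgt; apply/negP => hD.
have hb : b <= 0 by nra.
have ha : a <= 0 by nra.
have hb0 : b = 0 by lra.
have ha0 : a = 0 by lra.
rewrite ha0 hb0 in h3 h4 hD.
nra.
Qed.

Lemma edk_ge0 {R : realType} {n : nat} (c : R) (u : 'rV[R]_n) : 0 <= edk c u u.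
Proof. by rewrite /edk mulr_ge0 // ?edot_ge0 // invr_ge0 sqr_ge0. Qed.

Lemma cs_e {R : realType} {n : nat} (c : R) (u v : 'rV[R]_n) :
  edk c u v ^+ 2 <= edk c u u * edk c v v.
Proof.
rewrite /edk exprMn.
have -> : c ^-2 * edot u u * (c ^-2 * edot v v) = c^-2 ^+2 * (edot u u * edot v v) by ring.
by rewrite ler_wpM2l ?cs // sqr_ge0.
Qed.

Lemma den_pos {R : realType} {n : nat} (c : R) (u v : 'rV[R]_n) :
  edk c u u < 1 -> edk c v v < 1 ->
  0 < 1 + 2 * edk c u v + edk c u u * edk c v v.
Proof.
move=> hu hv.
have hp := cs_e c u v. have ha := edk_ge0 c u. have hb := edk_ge0 c v.
set p := edk c u v in hp *.
set a := edk c u u in hp ha hu *.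
set b := edk c v v in hp hb hv *.
have hab : a * b < 1 by nra.
have hp1 : p^+2 < 1 by lra.
have hp2 : -1 < p by nra.
nra.
Qed.
Arguments den_pos {R n c u v}.

Lemma madd_xy {R : realType} {n : nat} (c : R) (x y : 'rV[R]_n) :
  madd c x y = cmb x y ((1 + 2 * edk c x y + edk c y y) / (1 + 2 * edk c x y + edk c x x * edk c y y))
    ((1 - edk c x x) / (1 + 2 * edk c x y + edk c x x * edk c y y)).
Proof.
rewrite madd_e /cmb scalerDr !scalerA (mulrC (_^-1) (1 + 2 * edk c x y + edk c y y)).
rewrite (mulrC (_^-1) (1 - edk c x x)).
reflexivity.
Qed.

Lemma edkNN {R : realType} {n : nat} (c : R) (u v : 'rV[R]_n) : edk c (- u) (- v) = edk c u v.
Proof. by rewrite /edk -(scaleN1r u) -(scaleN1r v) edotZl edotZr; ring. Qed.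

Lemma madd_ball {R : realType} {n : nat} (c : R) (x y : 'rV[R]_n) :
  edk c x x < 1 -> edk c y y < 1 ->
  1 - edk c (madd c x y) (madd c x y) =
  (1 - edk c x x) * (1 - edk c y y) / (1 + 2 * edk c x y + edk c x x * edk c y y).
Proof.
move=> hx hy; have d := den_pos hx hy.
rewrite madd_xy edk_cmb /cd.
set m := edk c x x in hx d *; set q := edk c x y in d *; set r := edk c y y in hy d *.
field; lra.
Qed.
Arguments madd_ball {R n c x y}.

Lemma madd_ball' {R : realType} {n : nat} (c : R) (x y : 'rV[R]_n) :
  edk c x x < 1 -> edk c y y < 1 -> edk c (madd c x y) (madd c x y) < 1.
Proof.
move=> hx hy; have d := den_pos hx hy.
have := madd_ball hx hy.
have : 0 < (1 - edk c x x) * (1 - edk c y y) / (1 + 2 * edk c x y + edk c x x * edk c y y).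
  by apply: divr_gt0 => //; apply: mulr_gt0; lra.
lra.
Qed.
Arguments madd_ball' {R n c x y}.

Lemma L1 {R : realType} {n : nat} (c : R) (x y : 'rV[R]_n) :
  edk c x x < 1 -> edk c y y < 1 ->
  madd c x (- madd c x y) = - y.
Proof.
move=> hx hy; have d := den_pos hx hy.
rewrite [madd c x y]madd_xy cmb_opp -{1}(cmb10 x y).
rewrite (@madd_gen _ _ c x y _ _ _ _ _ _ _ erefl erefl erefl) !edk_cmb /cd.
have -> : - y = cmb x y 0 (-1) by rewrite /cmb scale0r add0r scaleN1r.
set m := edk c x x in hx d *; set q := edk c x y in d *; set r := edk c y y in hy d *.
set D := 1 + 2 * q + m * r in d *.
have hD2 : 1 + 2 * (1 * (- ((1 + 2 * q + r) / D)) * m + (1 * - ((1 - m) / D) + 0 * - ((1 + 2 * q + r) / D)) * q +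
          0 * - ((1 - m) / D) * r) + (1 * 1 * m + (1 * 0 + 0 * 1) * q + 0 * 0 * r) *
   (- ((1 + 2 * q + r) / D) * - ((1 + 2 * q + r) / D) * m + (- ((1 + 2 * q + r) / D) * - ((1 - m) / D) +
         - ((1 - m) / D) * - ((1 + 2 * q + r) / D)) * q + - ((1 - m) / D) * - ((1 - m) / D) * r)
   = (1 - m)^+2 / D.
  rewrite /D; field; rewrite -/D; lra.
rewrite hD2.
congr cmb; rewrite /D; field; rewrite -/D; lra.
Qed.

Lemma cmb_swap {R : realType} {n : nat} (x y : 'rV[R]_n) a b : cmb y x a b = cmb x y b a.
Proof. by rewrite /cmb addrC. Qed.

Lemma edk_x_cmb {R : realType} {n : nat} (c : R) (x y : 'rV[R]_n) a b :
  edk c x (cmb x y a b) = a * edk c x x + b * edk c x y.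
Proof. by rewrite -{1}(cmb10 x y) edk_cmb /cd; ring. Qed.

Lemma Qform {R : realType} {n : nat} (c : R) (M v : 'rV[R]_n) :
  edk c M M < 1 -> edk c v v < 1 ->
  madd c M (madd c v M) = cmb M v ((2 + 2 * edk c M v) / (1 + edk c M M + 2 * edk c M v))
                                   ((1 - edk c M M) / (1 + edk c M M + 2 * edk c M v)).
Proof.
move=> hM hv.
have hw := madd_ball' hv hM.
have dd := den_pos hM hw.
have d1 := den_pos hv hM.
rewrite [madd c v M]madd_xy cmb_swap in hw dd *.
rewrite edk_x_cmb edk_cmb /cd in dd.
rewrite -{1}(cmb10 M v).
rewrite (@madd_gen _ _ c M v _ _ _ _ _ _ _ erefl erefl erefl) !edk_cmb /cd.
rewrite !(edkC c v M) in dd d1 *.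
set m := edk c M M in hM dd d1 *; set q := edk c M v in dd d1 *; set r := edk c v v in hv dd d1 *.
have h3 : 0 < 1 + m + 2 * q.
  have := cs_e c M v; have := edk_ge0 c v; have := edk_ge0 c M; rewrite -/m -/q -/r => h00 h0 h1.
  have h4 : q^+2 <= m by nra.
  have h5 : (2 * q)^+2 < (1 + m)^+2 by nra.
  nra.
have hp : 0 < (1 + 2 * q + r * m) * (1 + m + 2 * q) ^+ 2.
  by apply: mulr_gt0 => //; apply: exprn_gt0.
congr cmb; field; (apply/and3P; split; [apply: lt0r_neq0; lra | apply: lt0r_neq0; lra | apply: lt0r_neq0; apply: (lt_le_trans hp); rewrite le_eqVlt; apply/orP; left; apply/eqP; ring]).
Qed.

Lemma cmb_negswap {R : realType} {n : nat} (x y : 'rV[R]_n) a b : cmb y (- x) a b = cmb x y (- b) a.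
Proof. by rewrite /cmb addrC scalerN scaleNr. Qed.

Lemma cmb_nest {R : realType} {n : nat} (x y : 'rV[R]_n) a b al be :
  cmb x (cmb x y a b) al be = cmb x y (al + be * a) (be * b).
Proof. by rewrite /cmb scalerDr !scalerA addrA scalerDl. Qed.

Lemma pos_aux {R : realType} {m p b : R} : 0 <= m -> m < 1 -> 0 <= b -> b < 1 -> p^+2 <= m * b ->
  0 < 1 + m - 2 * p.
Proof.
move=> h0 h1 h2 h3 h4.
have h5 : p^+2 <= m by nra.
have h6 : (2 * p)^+2 < (1 + m)^+2 by nra.
nra.
Qed.

Lemma edkNr {R : realType} {n : nat} (c : R) (u v : 'rV[R]_n) : edk c u (- v) = - edk c u v.
Proof. by rewrite /edk -(scaleN1r v) edotZr; ring. Qed.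

Lemma ucf {R : realType} {n : nat} (c : R) (M B : 'rV[R]_n) :
  edk c M M < 1 -> edk c B B < 1 ->
  madd c (- M) (madd c B (- M)) =
  cmb M B (- 2 * (1 - edk c M B) / (1 + edk c M M - 2 * edk c M B))
          ((1 - edk c M M) / (1 + edk c M M - 2 * edk c M B)).
Proof.
move=> hM hB.
have hM' : edk c (- M) (- M) < 1 by rewrite edkNN.
have d1 := den_pos hB hM'.
rewrite [madd c B (- M)]madd_xy cmb_negswap !edkNN edkNr.
have -> : - M = cmb M B (-1) 0 by rewrite /cmb scale0r addr0 scaleN1r.
rewrite (@madd_gen _ _ c M B _ _ _ _ _ _ _ erefl erefl erefl) !edk_cmb /cd.
rewrite !edkNN edkNr in d1 *.
rewrite (edkC c B M) in d1 *.
have := cs_e c M B; have := edk_ge0 c M; have := edk_ge0 c B.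
set m := edk c M M in hM d1 *; set p := edk c M B in d1 *; set b := edk c B B in hB d1 *.
move=> h0 h1 h2.
have hs := pos_aux h1 hM h0 hB h2.
have hp : 0 < (1 + 2 * - p + b * m) * (1 + m - 2 * p) ^+ 2.
  by apply: mulr_gt0 => //; apply: exprn_gt0.
congr cmb; field; (apply/and3P; split; [apply: lt0r_neq0; lra | apply: lt0r_neq0; lra | apply: lt0r_neq0; apply: (lt_le_trans hp); rewrite le_eqVlt; apply/orP; left; apply/eqP; ring]).
Qed.

Lemma edk0r {R : realType} {n : nat} (c : R) (u : 'rV[R]_n) : edk c u 0 = 0.
Proof. by rewrite /edk /edot big1 ?mulr0 // => i _; rewrite mxE mulr0. Qed.
Lemma edk0l {R : realType} {n : nat} (c : R) (u : 'rV[R]_n) : edk c 0 u = 0.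
Proof. by rewrite edkC edk0r. Qed.
Lemma edkNl {R : realType} {n : nat} (c : R) (u v : 'rV[R]_n) : edk c (- u) v = - edk c u v.
Proof. by rewrite edkC edkNr edkC. Qed.

Lemma madd_N0 {R : realType} {n : nat} (c : R) (b : 'rV[R]_n) : madd c (- b) b = 0.
Proof.
rewrite madd_e edkNN edkNl.
have -> : 1 + 2 * - edk c b b + edk c b b = 1 - edk c b b by ring.
by rewrite scalerN addNr scaler0.
Qed.

Lemma madd_0 {R : realType} {n : nat} (c : R) (a : 'rV[R]_n) : madd c a 0 = a.
Proof.
rewrite madd_e !edk0r !mulr0 !addr0 scaler0 addr0 invr1 !scale1r //.
Qed.

Lemma mcoadd_eq {R : realType} {n : nat} (c : R) (a b : 'rV[R]_n) :
  mcoadd c a b = madd c a (madd c (- madd c a (- b)) a).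
Proof. by rewrite /mcoadd /gyr madd_N0 madd_0. Qed.

Lemma Qv {R : realType} {n : nat} (c : R) (M v : 'rV[R]_n) :
  edk c M M < 1 -> edk c v v < 1 ->
  mcoadd c M (madd c M v) = madd c M (madd c v M).
Proof. by move=> hM hv; rewrite mcoadd_eq L1 // opprK. Qed.

Lemma BQ {R : realType} {n : nat} (c : R) (M B : 'rV[R]_n) :
  edk c M M < 1 -> edk c B B < 1 ->
  let u := madd c (- M) (madd c B (- M)) in
  madd c M (madd c u M) = B.
Proof.
move=> hM hB u.
have hM' : edk c (- M) (- M) < 1 by rewrite edkNN.
have hu : edk c u u < 1 by apply: madd_ball' => //; apply: madd_ball'.
rewrite Qform // /u ucf // cmb_nest edk_x_cmb.
have := cs_e c M B; have := edk_ge0 c M; have := edk_ge0 c B.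
set m := edk c M M in hM *; set p := edk c M B; set b := edk c B B in hB *.
move=> h0 h1 h2.
have hs := pos_aux h1 hM h0 hB h2.
have hp : 0 < (1 - m) ^+ 2 by apply: exprn_gt0; lra.
rewrite -[RHS](cmb01 M B); congr cmb; field; (apply/andP; split; [apply: lt0r_neq0; lra | apply: lt0r_neq0; apply: (lt_le_trans hp); rewrite le_eqVlt; apply/orP; left; apply/eqP; ring]).
Qed.

Lemma tanh_E {R : realType} (z : R) : tanhR z = (expR (2 * z) - 1) / (expR (2 * z) + 1).
Proof.
have h := expR_gt0 z.
rewrite /tanhR expRN (_ : 2 * z = z + z); last by ring.
rewrite expRD.
have h2 : 0 < expR z * expR z + 1 by nra.
by field; rewrite (lt0r_neq0 h2) (lt0r_neq0 h).
Qed.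

Lemma tanh_sq_lt1 {R : realType} (z : R) : tanhR z ^+ 2 < 1.
Proof.
rewrite tanh_E; have h := expR_gt0 (2 * z); set E := expR (2 * z) in h *.
rewrite expr_div_n ltr_pdivrMr ?exprn_gt0 //; last lra.
rewrite mul1r; nra.
Qed.

Lemma tanh_artanh {R : realType} (y : R) : -1 < y -> y < 1 -> tanhR (artanhR y) = y.
Proof.
move=> h1 h2; rewrite tanh_E /artanhR.
have hX : 0 < (1 + y) / (1 - y) by apply: divr_gt0; lra.
have -> : 2 * (ln ((1 + y) / (1 - y)) / 2) = ln ((1 + y) / (1 - y)) by field.
have -> : expR (ln ((1 + y) / (1 - y))) = (1 + y) / (1 - y) by apply/eqP; rewrite lnK_eq.
by field; lra.
Qed.

Lemma tanh_double {R : realType} (z : R) : tanhR (2 * z) = 2 * tanhR z / (1 + tanhR z ^+ 2).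
Proof.
rewrite !tanh_E (_ : 2 * (2 * z) = 2 * z + 2 * z); last by ring.
rewrite expRD; have h := expR_gt0 (2 * z); set E := expR (2 * z) in h *.
have h2 : 0 < E * E + 1 by nra.
have h3 : 0 < (E + 1) ^+ 2 + (E - 1) ^+ 2 by nra.
have h4 : 0 < E + 1 by lra.
by field; rewrite (lt0r_neq0 h4) (lt0r_neq0 h3) (lt0r_neq0 h2).
Qed.

Lemma ball_iff {R : realType} {n : nat} (c : R) (u : 'rV[R]_n) : 0 < c ->
  (enorm u < c) = (edk c u u < 1).
Proof.
move=> c0.
rewrite -(@ltr_pXn2r _ 2) ?nnegrE ?sqrtr_ge0 ?(ltW c0) // enorm_sq.
by rewrite /edk mulrC ltr_pdivrMr ?exprn_gt0 // mul1r.
Qed.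

Lemma edot_eq0 {R : realType} {n : nat} (u : 'rV[R]_n) : edot u u = 0 -> u = 0.
Proof.
move=> h; apply/rowP => i; rewrite mxE.
have := h; rewrite /edot => /eqP; rewrite psumr_eq0; last by move=> j _; rewrite -expr2 sqr_ge0.
move/allP => /(_ i (mem_index_enum i)) /=.
by rewrite mulf_eq0 orbb => /eqP.
Qed.

Lemma edk_gt0 {R : realType} {n : nat} (c : R) (u : 'rV[R]_n) : 0 < c -> u != 0 -> 0 < edk c u u.
Proof.
move=> c0 hu; rewrite /edk mulr_gt0 ?invr_gt0 ?exprn_gt0 //.
rewrite lt0r edot_ge0 andbT; apply/eqP => /edot_eq0 h; by rewrite h eqxx in hu.
Qed.

Lemma enorm_gt0 {R : realType} {n : nat} (u : 'rV[R]_n) : u != 0 -> 0 < enorm u.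
Proof.
move=> hu; rewrite /enorm sqrtr_gt0 lt0r edot_ge0 andbT; apply/eqP => /edot_eq0 h.
by rewrite h eqxx in hu.
Qed.

Lemma edk_enorm {R : realType} {n : nat} (c : R) (u : 'rV[R]_n) : edk c u u = (enorm u / c) ^+ 2.
Proof. by rewrite expr_div_n enorm_sq /edk mulrC. Qed.

Lemma edkZZ {R : realType} {n : nat} (c a : R) (u v : 'rV[R]_n) : edk c (a *: u) v = a * edk c u v.
Proof. by rewrite /edk edotZl; ring. Qed.
Lemma edkZr {R : realType} {n : nat} (c a : R) (u v : 'rV[R]_n) : edk c u (a *: v) = a * edk c u v.
Proof. by rewrite /edk edotZr; ring. Qed.


Lemma mscale_lam {R : realType} {n : nat} (c t : R) (u : 'rV[R]_n) : u != 0 ->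
  Defs.mscale c t u = (c * tanhR (t * artanhR (enorm u / c)) / enorm u) *: u.
Proof. by move=> hu; rewrite /Defs.mscale (negbTE hu). Qed.

Lemma mscale_ball {R : realType} {n : nat} (c t : R) (u : 'rV[R]_n) : 0 < c ->
  edk c (Defs.mscale c t u) (Defs.mscale c t u) < 1.
Proof.
move=> c0; have [->|hu] := eqVneq u 0.
  by rewrite /Defs.mscale eqxx edk0r.
rewrite mscale_lam // edkZZ edkZr edk_enorm.
have hn := enorm_gt0 u hu.
have ht := tanh_sq_lt1 (t * artanhR (enorm u / c)).
set T := tanhR _ in ht *.
have -> : c * T / enorm u * (c * T / enorm u * (enorm u / c) ^+ 2) = T ^+ 2.
  by field; rewrite (lt0r_neq0 hn) (lt0r_neq0 c0).
by [].
Qed.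

Lemma half_scale {R : realType} {n : nat} (c : R) (A : 'rV[R]_n) : 0 < c -> edk c A A < 1 ->
  A = (2 / (1 + edk c (Defs.mscale c 2^-1 A) (Defs.mscale c 2^-1 A))) *: Defs.mscale c 2^-1 A.
Proof.
move=> c0 hA; have [->|hA0] := eqVneq A 0.
  by rewrite /Defs.mscale eqxx scaler0.
rewrite mscale_lam // edkZZ edkZr scalerA edk_enorm.
have hn := enorm_gt0 A hA0.
rewrite edk_enorm in hA.
set r := enorm A / c in hA *.
have hr : 0 < r by apply: divr_gt0.
have hr1 : r < 1 by nra.
have hd := tanh_double (2^-1 * artanhR r).
rewrite (_ : 2 * (2^-1 * artanhR r) = artanhR r) in hd; last by field.
rewrite tanh_artanh in hd; [|lra|lra].
set T := tanhR _ in hd *.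
have hT : 0 < 1 + T ^+ 2 by have := sqr_ge0 T; lra.
have eA : enorm A = r * c by rewrite /r; field; rewrite (lt0r_neq0 c0).
have hT0 : 0 < T.
  have : 0 < 2 * T / (1 + T ^+ 2) by rewrite -hd.
  by rewrite pmulr_lgt0 ?invr_gt0 // pmulr_rgt0.
rewrite eA.
have -> : 2 / (1 + c * T / (r * c) * (c * T / (r * c) * r ^+ 2)) * (c * T / (r * c)) = 1.
  by rewrite hd; field; rewrite (lt0r_neq0 hT) (lt0r_neq0 c0) (lt0r_neq0 hT0).
by rewrite scale1r.
Qed.

Lemma mscale_surj {R : realType} {n : nat} (c l : R) (u : 'rV[R]_n) : 0 < c -> u != 0 ->
  edk c u u < 1 -> l ^+ 2 * edk c u u < 1 -> exists t, Defs.mscale c t u = l *: u.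
Proof.
move=> c0 hu h1 h2.
have hn := enorm_gt0 u hu.
rewrite edk_enorm in h1 h2.
set r := enorm u / c in h1 h2.
have hr : 0 < r by apply: divr_gt0.
have hr1 : r < 1 by nra.
have ha : 0 < artanhR r.
  rewrite /artanhR; apply: divr_gt0 => //; apply: ln_gt0.
  by rewrite ltr_pdivlMr; lra.
have hy1 : (l * r) ^+ 2 < 1 by rewrite exprMn.
have hy2 : -1 < l * r by nra.
have hy3 : l * r < 1 by nra.
exists (artanhR (l * r) / artanhR r).
rewrite mscale_lam // -/r (_ : artanhR (l * r) / artanhR r * artanhR r = artanhR (l * r)); last first.
  by field; rewrite (lt0r_neq0 ha).
rewrite tanh_artanh //; congr (_ *: _); rewrite /r; field.
by rewrite (lt0r_neq0 hn) (lt0r_neq0 c0).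
Qed.

Lemma Qline {R : realType} {n : nat} (c l : R) (M u : 'rV[R]_n) :
  edk c M M < 1 -> edk c (l *: u) (l *: u) < 1 ->
  madd c M (madd c (l *: u) M) =
  cmb M u ((2 + 2 * (l * edk c M u)) / (1 + edk c M M + 2 * (l * edk c M u)))
          (l * (1 - edk c M M) / (1 + edk c M M + 2 * (l * edk c M u))).
Proof.
move=> hM hu; rewrite Qform // edkZr /cmb scalerA.
have -> : (1 - edk c M M) / (1 + edk c M M + 2 * (l * edk c M u)) * l = l * (1 - edk c M M) / (1 + edk c M M + 2 * (l * edk c M u)) by ring.
by [].
Qed.

Lemma wpos {R : realType} {n : nat} (c l : R) (M u : 'rV[R]_n) :
  edk c M M < 1 -> edk c (l *: u) (l *: u) < 1 ->
  0 < 1 + edk c M M + 2 * (l * edk c M u).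
Proof.
move=> hM hu.
have := cs_e c M (l *: u); have := edk_ge0 c M; have := edk_ge0 c (l *: u).
move=> h0 h1 h2.
have h3 : (- edk c M (l *: u)) ^+ 2 <= edk c M M * edk c (l *: u) (l *: u) by rewrite sqrrN.
have := pos_aux h1 hM h0 hu h3.
rewrite edkZr; lra.
Qed.

Lemma lincmb {R : realType} {n : nat} (x y : 'rV[R]_n) a s p q :
  a *: x + s *: (cmb x y p q - a *: x) = cmb x y (a + s * (p - a)) (s * q).
Proof. by apply/rowP => i; rewrite /cmb !mxE; ring. Qed.

Lemma conv_coef {R : realType} (m q s : R) : 0 < 1 + m -> 0 < 1 + m + 2 * (1 * q) ->
  1 + m + 2 * (1 * q) - 2 * s * q != 0 ->
  let l := s * (1 + m) / (1 + m + 2 * (1 * q) - 2 * s * q) in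
  [/\ 1 + m + 2 * (l * q) != 0,
      (2 + 2 * (l * q)) / (1 + m + 2 * (l * q)) =
        2 / (1 + m) + s * ((2 + 2 * (1 * q)) / (1 + m + 2 * (1 * q)) - 2 / (1 + m))
    & l * (1 - m) / (1 + m + 2 * (l * q)) = s * (1 * (1 - m) / (1 + m + 2 * (1 * q)))].
Proof.
move=> h1 h2 h3 l.
have h3' : 1 + m + 2 * q - 2 * s * q != 0 by rewrite mul1r in h3.
have n1 : 1 + m != 0 by apply: lt0r_neq0.
have n2 : 1 + m + 2 * q != 0 by rewrite mul1r in h2; apply: lt0r_neq0.
have hw : 1 + m + 2 * (l * q) = (1 + m) * (1 + m + 2 * (1 * q)) / (1 + m + 2 * (1 * q) - 2 * s * q).
  by rewrite /l; field.
have hw0 : 1 + m + 2 * (l * q) != 0.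
  by rewrite hw !mulf_neq0 ?invr_eq0 // lt0r_neq0.
have n4 : (1 + m) * (1 + m + 2 * q - 2 * s * q) + 2 * (s * (1 + m) * q) != 0.
  have -> : (1 + m) * (1 + m + 2 * q - 2 * s * q) + 2 * (s * (1 + m) * q) = (1 + m) * (1 + m + 2 * q) by ring.
  by rewrite mulf_neq0.
split => //.
  by rewrite /l; field; rewrite n1 n2 h3' n4.
by rewrite /l; field; rewrite n2 h3' n4.
Qed.

Lemma norm_coef {R : realType} (m q r l : R) : 1 + m + 2 * (l * q) != 0 ->
  1 - cd m q r ((2 + 2 * (l * q)) / (1 + m + 2 * (l * q))) (l * (1 - m) / (1 + m + 2 * (l * q)))
               ((2 + 2 * (l * q)) / (1 + m + 2 * (l * q))) (l * (1 - m) / (1 + m + 2 * (l * q)))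
  = (1 - m) ^+ 2 * (1 - l ^+ 2 * r) / (1 + m + 2 * (l * q)) ^+ 2.
Proof. by move=> h; rewrite /cd; field. Qed.

Lemma inf_coef {R : realType} (m q s : R) : 0 < 1 + m -> 0 < 1 + m + 2 * (1 * q) -> q != 0 ->
  1 + m + 2 * (1 * q) - 2 * s * q = 0 ->
  2 / (1 + m) + s * ((2 + 2 * (1 * q)) / (1 + m + 2 * (1 * q)) - 2 / (1 + m)) = 1 /\ s * (1 * (1 - m) / (1 + m + 2 * (1 * q))) = (1 - m) / (2 * q).
Proof.
move=> h1 h2 hq h.
have n2 : 1 + m + 2 * q != 0 by rewrite mul1r in h2; apply: lt0r_neq0.
have e1 : s * (2 * q) = 1 + m + 2 * q by rewrite mul1r in h; lra.
have hs : s = (1 + m + 2 * q) / (2 * q) by rewrite -e1; field.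
have n1 : 1 + m != 0 by apply: lt0r_neq0.
by rewrite hs; split; field; rewrite ?n1 ?n2 ?hq.
Qed.


Theorem theorem2 (R : realType) (n : nat) (c : R) (A B : 'rV[R]_n) :
  0 < c -> (2 <= n)%N -> enorm A < c -> enorm B < c -> A != B ->
  [set PAB c A B t | t in [set: R]] =
  [set x : 'rV[R]_n | enorm x < c /\ exists s : R, x = A + s *: (B - A)].
Proof.
move=> c0 _ hA hB hAB.
rewrite ball_iff // in hA; rewrite ball_iff // in hB.
pose M := Defs.mscale c 2^-1 A.
have hM : edk c M M < 1 by apply: mscale_ball.
have eA : A = (2 / (1 + edk c M M)) *: M by apply: half_scale.
have hM' : edk c (- M) (- M) < 1 by rewrite edkNN.
pose u := madd c (- M) (madd c B (- M)).
have hu : edk c u u < 1 by apply: madd_ball' => //; apply: madd_ball'.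
have hP : forall t, PAB c A B t = madd c M (madd c (Defs.mscale c t u) M).
  by move=> t; rewrite /PAB /= -/M /msub -/u Qv //; apply: mscale_ball.
have hu1 : edk c (1 *: u) (1 *: u) < 1 by rewrite scale1r.
have eB : B = cmb M u ((2 + 2 * (1 * edk c M u)) / (1 + edk c M M + 2 * (1 * edk c M u)))
          (1 * (1 - edk c M M) / (1 + edk c M M + 2 * (1 * edk c M u))).
  by rewrite -Qline // scale1r; symmetry; apply: BQ.
have hu0 : u != 0.
  apply/eqP => u0; move: hAB; rewrite {1}eA eB u0 edk0r /cmb scaler0 addr0 !mulr0 !addr0.
  by rewrite eqxx.
have w1 := @wpos _ _ c 1 M u hM hu1.
have m0 := edk_ge0 c M.
have r0 := edk_ge0 c u.
have h1m : 0 < 1 + edk c M M by lra.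
have nw1 : 1 + edk c M M + 2 * edk c M u != 0 by rewrite mul1r in w1; apply: lt0r_neq0.
apply/seteqP; split => x /=.
  move=> [t _ <-]; rewrite hP mscale_lam //.
  set l := c * _ / _.
  have hl : edk c (l *: u) (l *: u) < 1 by rewrite -mscale_lam //; apply: mscale_ball.
  have wl := @wpos _ _ c l M u hM hl.
  split.
    by rewrite ball_iff //; apply: madd_ball' => //; apply: madd_ball'.
  exists (l * (1 + edk c M M + 2 * (1 * edk c M u)) / (1 + edk c M M + 2 * (l * edk c M u))).
  rewrite Qline // eA eB lincmb.
  by congr cmb; field; rewrite ?(lt0r_neq0 h1m) ?nw1 ?(lt0r_neq0 wl).
move=> [hx [s hxs]].
rewrite eA eB lincmb in hxs.
rewrite ball_iff // hxs edk_cmb in hx.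
have ru0 := edk_gt0 c u c0 hu0.
set m := edk c M M in hM eA eB w1 m0 h1m nw1 hx hxs *.
set q := edk c M u in eB w1 nw1 hx hxs *.
set r := edk c u u in hu r0 ru0 hx *.
have [hc|hc] := eqVneq (1 + m + 2 * (1 * q) - 2 * s * q) 0.
  exfalso.
  have hq : q != 0.
    by apply/eqP => q0; rewrite q0 !mulr0 subr0 addr0 in hc; lra.
  have [e1 e2] := @inf_coef _ m q s h1m w1 hq hc.
  rewrite e1 e2 in hx.
  have : cd m q r 1 ((1 - m) / (2 * q)) 1 ((1 - m) / (2 * q)) = 1 + ((1 - m) / (2 * q)) ^+ 2 * r.
    by rewrite /cd; field.
  have := sqr_ge0 ((1 - m) / (2 * q)).
  nra.
have [hw0 e1 e2] := @conv_coef _ m q s h1m w1 hc.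
rewrite -e1 -e2 in hx hxs.
set l := s * (1 + m) / (1 + m + 2 * (1 * q) - 2 * s * q) in hw0 hx hxs *.
have := @norm_coef _ m q r l hw0.
move=> hn.
have hm1 : 1 - m != 0 by apply: lt0r_neq0; lra.
have hw2 : 0 < (1 + m + 2 * (l * q)) ^+ 2 by rewrite lt0r sqr_ge0 expf_neq0.
have hm2 : 0 < (1 - m) ^+ 2 by rewrite lt0r sqr_ge0 expf_neq0.
have e3 : 1 - l ^+ 2 * r = ((1 - m) ^+ 2 * (1 - l ^+ 2 * r) / (1 + m + 2 * (l * q)) ^+ 2) *
   (1 + m + 2 * (l * q)) ^+ 2 / (1 - m) ^+ 2.
  by field; rewrite hw0 hm1.
have hb : 0 < 1 - l ^+ 2 * r.
  rewrite e3 -hn; apply: divr_gt0 => //; apply: mulr_gt0 => //; lra.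
have hlr : l ^+ 2 * edk c u u < 1 by rewrite -/r; lra.
have hl : edk c (l *: u) (l *: u) < 1.
  by rewrite edkZZ edkZr -/r (_ : l * (l * r) = l ^+ 2 * r) //; ring.
have [t ht] := @mscale_surj _ _ c l u c0 hu0 hu hlr.
exists t => //.
by rewrite hP ht Qline // hxs.
Qed.
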